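(* Let $\gamma_1=\gamma_2=\frac\pi4$ and for real $x_1,x_2$ with $x_1^2+x_2^2+\frac19\le1$ let $\rho(x_1,x_2)=\frac12\big(\Sigma_0+x_1\Sigma_1+x_2\Sigma_2-\frac13\Sigma_3\big)$. Then $g(\rho(x_1,x_2))>g(\rho(0,0))=\frac49$ whenever $x_1^2+x_2^2>0$. (Here $\rho(0,0)=\frac13|00\rangle\langle00|+\frac23|\psi^+\rangle\langle\psi^+|$ with $|\psi^+\rangle=\frac1{\sqrt2}(|01\rangle+|10\rangle)$, the two-qubit reduced state of the W state.)
   Context: On two qubits, let $\sigma_1,\sigma_2,\sigma_3$ denote the Pauli matrices on the first qubit and $\tau_1,\tau_2,\tau_3$ those on the second. For parameters $\gamma_1,\gamma_2$ set $u=\cos\gamma_1\cos\gamma_2$, $v=\sin\gamma_1\sin\gamma_2$, $z_1=\sin\gamma_1\cos\gamma_2$, $z_2=\cos\gamma_1\sin\gamma_2$, and define $\Sigma_0=\frac12(I+u\sigma_3+v\tau_3+z_1\sigma_1\tau_1+z_2\sigma_2\tau_2)$, $\Sigma_1=\frac12(\sin\gamma_1\sigma_1+\cos\gamma_2\tau_1+\sin\gamma_2\sigma_1\tau_3+\cos\gamma_1\sigma_3\tau_1)$, $\Sigma_2=\frac12(\sin\gamma_2\sigma_2+\cos\gamma_1\tau_2+\sin\gamma_1\sigma_2\tau_3+\cos\gamma_2\sigma_3\tau_2)$, $\Sigma_3=\frac12(v\sigma_3+u\tau_3-z_2\sigma_1\tau_1-z_1\sigma_2\tau_2+\sigma_3\tau_3)$.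 For a two-qubit density matrix $\rho$, $g(\rho):=\max\operatorname{tr}[\rho(\rho_1\otimes\rho_2)]$ over all pure single-qubit states $\rho_1,\rho_2$. *)

(* Defs.v *)
From Stdlib Require Import Reals Lra.
Open Scope R_scope.

Record C := mkC { Re : R ; Im : R }.
Definition C0 : C := mkC 0 0.
Definition RtoC (r : R) : C := mkC r 0.
Definition Cadd (z w : C) : C := mkC (Re z + Re w) (Im z + Im w).
Definition Cmul (z w : C) : C :=
  mkC (Re z * Re w - Im z * Im w) (Re z * Im w + Im z * Re w).
Definition Cconj (z : C) : C := mkC (Re z) (- Im z).
Definition Cnorm2 (z : C) : R := Re z * Re z + Im z * Im z.

Fixpoint Csum (n : nat) (f : nat -> C) : C :=
  match n with O => C0 | S k => Cadd (Csum k f) (f k) end.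

(* Matrices: entries indexed by naturals; 2x2 use indices 0,1 and 4x4 use
   indices 0..3 (two-qubit basis |ab> has index 2a+b, first qubit is the
   high bit). *)
Definition Mat := nat -> nat -> C.
Definition madd (A B : Mat) : Mat := fun i j => Cadd (A i j) (B i j).
Definition mscale (r : R) (A : Mat) : Mat := fun i j => Cmul (RtoC r) (A i j).
Definition mmul (n : nat) (A B : Mat) : Mat :=
  fun i j => Csum n (fun k => Cmul (A i k) (B k j)).
Definition trace (n : nat) (A : Mat) : C := Csum n (fun i => A i i).
Definition kron2 (A B : Mat) : Mat :=
  fun i j => Cmul (A (i / 2)%nat (j / 2)%nat) (B (i mod 2)%nat (j mod 2)%nat).

(* Pauli matrices: pauli 0 = I, 1 = sigma_x, 2 = sigma_y, 3 = sigma_z. *)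
Definition pauli (k : nat) : Mat := fun i j =>
  match k, i, j with
  | 0%nat, 0%nat, 0%nat => RtoC 1
  | 0%nat, 1%nat, 1%nat => RtoC 1
  | 1%nat, 0%nat, 1%nat => RtoC 1
  | 1%nat, 1%nat, 0%nat => RtoC 1
  | 2%nat, 0%nat, 1%nat => mkC 0 (-1)
  | 2%nat, 1%nat, 0%nat => mkC 0 1
  | 3%nat, 0%nat, 0%nat => RtoC 1
  | 3%nat, 1%nat, 1%nat => RtoC (-1)
  | _, _, _ => C0
  end.

Definition st (a b : nat) : Mat := kron2 (pauli a) (pauli b).

Section Sig.
Variables g1 g2 : R.
Definition u := cos g1 * cos g2.
Definition v := sin g1 * sin g2.
Definition z1 := sin g1 * cos g2.
Definition z2 := cos g1 * sin g2.

Definition Sigma0 : Mat := mscale (1/2)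
  (madd (st 0 0) (madd (mscale u (st 3 0)) (madd (mscale v (st 0 3))
   (madd (mscale z1 (st 1 1)) (mscale z2 (st 2 2)))))).
Definition Sigma1 : Mat := mscale (1/2)
  (madd (mscale (sin g1) (st 1 0)) (madd (mscale (cos g2) (st 0 1))
   (madd (mscale (sin g2) (st 1 3)) (mscale (cos g1) (st 3 1))))).
Definition Sigma2 : Mat := mscale (1/2)
  (madd (mscale (sin g2) (st 2 0)) (madd (mscale (cos g1) (st 0 2))
   (madd (mscale (sin g1) (st 2 3)) (mscale (cos g2) (st 3 2))))).
Definition Sigma3 : Mat := mscale (1/2)
  (madd (mscale v (st 3 0)) (madd (mscale u (st 0 3))
   (madd (mscale (- z2) (st 1 1)) (madd (mscale (- z1) (st 2 2)) (st 3 3))))).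
End Sig.

Definition rhoW (x1 x2 : R) : Mat :=
  let g := PI / 4 in
  mscale (1/2) (madd (Sigma0 g g) (madd (mscale x1 (Sigma1 g g))
    (madd (mscale x2 (Sigma2 g g)) (mscale (-(1/3)) (Sigma3 g g))))).

Definition qvec (a b : C) (i : nat) : C :=
  match i with 0%nat => a | 1%nat => b | _ => C0 end.
Definition proj2 (a b : C) : Mat := fun i j => Cmul (qvec a b i) (Cconj (qvec a b j)).
Definition unit_vec (a b : C) : Prop := Cnorm2 a + Cnorm2 b = 1.

(* tr[rho (rho1 (x) rho2)] for pure rho1 = |(a,b)><(a,b)|, rho2 = |(c,d)><(c,d)|.
   (The trace is real since all matrices involved are Hermitian; we take Re.) *)
Definition overlap (rho : Mat) (a b c d : C) : R :=
  Re (trace 4 (mmul 4 rho (kron2 (proj2 a b) (proj2 c d)))).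

Definition is_g (rho : Mat) (m : R) : Prop :=
  (exists a b c d, unit_vec a b /\ unit_vec c d /\ overlap rho a b c d = m) /\
  (forall a b c d, unit_vec a b -> unit_vec c d -> overlap rho a b c d <= m).

Definition ket4 (k : nat) : nat -> C := fun i => if Nat.eqb i k then RtoC 1 else C0.
Definition psiplus (i : nat) : C :=
  Cmul (RtoC (/ sqrt 2)) (Cadd (ket4 1 i) (ket4 2 i)).
Definition Wred : Mat := fun i j =>
  Cadd (Cmul (RtoC (1/3)) (Cmul (ket4 0 i) (Cconj (ket4 0 j))))
       (Cmul (RtoC (2/3)) (Cmul (psiplus i) (Cconj (psiplus j)))).

(* Main.v *)
Require Import Defs.
From Stdlib Require Import Reals Lra Lia.
Open Scope R_scope.

Lemma s2 : 1 / sqrt 2 * (1 / sqrt 2) = /2.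
Proof. assert (H:=sqrt_sqrt 2). assert (0<sqrt 2) by (apply sqrt_lt_R0; lra). replace (1 / sqrt 2 * (1 / sqrt 2)) with (/ (sqrt 2 * sqrt 2)) by (field; lra). rewrite H; lra. Qed.
Lemma Ceq z w : Re z = Re w -> Im z = Im w -> z = w.
Proof. destruct z, w; simpl; intros; subst; reflexivity. Qed.
Lemma part1 i j : (i < 4)%nat -> (j < 4)%nat -> rhoW 0 0 i j = Wred i j.
Proof.
  intros Hi Hj.
  assert (Ht : (/ sqrt 2) ^ 2 = /2).
  { rewrite <- s2. field. assert (0<sqrt 2) by (apply sqrt_lt_R0; lra). lra. }
  unfold rhoW, Sigma0, Sigma1, Sigma2, Sigma3, u, v, z1, z2.
  rewrite sin_PI4, cos_PI4, s2.
  set (s := 1 / sqrt 2).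
  unfold Wred, psiplus, ket4, kron2, st, madd, mscale.
  destruct i as [|[|[|[|i]]]]; try lia; destruct j as [|[|[|[|j]]]]; try lia;
  apply Ceq; simpl; ring_simplify; try rewrite Ht. all: field.
Qed.

Definition Ff (s x1 x2 n0 n1 n2 n3 k0 k1 k2 k3 : R) :=
  n0*k0 + /3*(n3*k0+n0*k3) + 2/3*(n1*k1+n2*k2) - /3*n3*k3
  + s*x1*(n1*k0+n0*k1+n1*k3+n3*k1) + s*x2*(n2*k0+n0*k2+n2*k3+n3*k2).

Definition sg (c : R) := sqrt (1 - c*c).
Definition Pf s r c := 2/3 * sg c + s*r*(1+c).
Definition Qf s r c := /3*(1-c) + s*r*sg c.
Definition hf s r c := 1 + /3*c + s*r*sg c + sqrt (Pf s r c * Pf s r c + Qf s r c * Qf s r c).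

Lemma cp_id x : continuity_pt (fun y => y) x.
Proof. exact (derivable_continuous_pt id x (derivable_pt_id x)). Qed.
Lemma cp_const k x : continuity_pt (fun _ => k) x.
Proof. apply continuity_pt_const. intros a b; reflexivity. Qed.
Lemma cp_plus f g x : continuity_pt f x -> continuity_pt g x -> continuity_pt (fun y => f y + g y) x.
Proof. intros; exact (continuity_pt_plus f g x H H0). Qed.
Lemma cp_minus f g x : continuity_pt f x -> continuity_pt g x -> continuity_pt (fun y => f y - g y) x.
Proof. intros; exact (continuity_pt_minus f g x H H0). Qed.
Lemma cp_mult f g x : continuity_pt f x -> continuity_pt g x -> continuity_pt (fun y => f y * g y) x.
Proof. intros; exact (continuity_pt_mult f g x H H0). Qed.
Lemma cp_sqrt f x : continuity_pt f x -> 0 <= f x -> continuity_pt (fun y => sqrt (f y)) x.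
Proof. intros; exact (continuity_pt_comp f sqrt x H (continuity_pt_sqrt _ H0)). Qed.

Lemma sg_cont c : -1 <= c <= 1 -> continuity_pt sg c.
Proof.
  intros Hc. unfold sg. apply cp_sqrt.
  - apply cp_minus. apply cp_const. apply cp_mult; apply cp_id.
  - nra.
Qed.

Ltac cont H := match goal with |- continuity_pt ?f ?x => let g := eval cbv beta in (fun z => f z) in change (continuity_pt g x) end;
 lazymatch goal with
 | |- continuity_pt (fun y => y) _ => apply cp_id
 | |- continuity_pt (fun y => sg y) _ => exact H
 | |- continuity_pt (fun y => _ + _) _ => apply cp_plus; [cont H | cont H]
 | |- continuity_pt (fun y => _ - _) _ => apply cp_minus; [cont H | cont H]
 | |- continuity_pt (fun y => _ * _) _ => apply cp_mult; [cont H | cont H]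
 | |- continuity_pt (fun y => sqrt _) _ => apply cp_sqrt; [cont H | ]
 | |- _ => apply cp_const
 end.

Lemma hf_cont s r c : -1 <= c <= 1 -> continuity_pt (hf s r) c.
Proof.
  intros Hc. unfold hf, Pf, Qf.
  assert (H := sg_cont c Hc).
  cont H. cbv beta. apply Rplus_le_le_0_compat; apply Rle_0_sqr.
Qed.

Lemma sg_prop c : -1 <= c <= 1 -> 0 <= sg c /\ sg c * sg c = 1 - c*c.
Proof. intros. unfold sg. split. apply sqrt_pos. apply sqrt_sqrt. nra. Qed.

Lemma G_bound s r e1 e2 n1 n2 n3 k1 k2 k3 :
  0 < s -> 0 < r -> e1*e1 + e2*e2 = 1 ->
  n1*n1+n2*n2+n3*n3 = 1 -> k1*k1+k2*k2+k3*k3 = 1 ->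
  Ff s (r*e1) (r*e2) 1 n1 n2 n3 1 k1 k2 k3 <= hf s r n3.
Proof.
  intros Hs Hr He Hn Hk.
  assert (Hc : -1 <= n3 <= 1) by nra.
  destruct (sg_prop n3 Hc) as [Hsg0 Hsg].
  set (σ := sg n3) in *.
  set (t := e1*n1 + e2*n2).
  assert (Ht2 : t*t <= σ*σ).
  { assert (t*t + (e1*n2-e2*n1)*(e1*n2-e2*n1) = (e1*e1+e2*e2)*(n1*n1+n2*n2)) by (unfold t; ring).
    rewrite He in H. assert (0 <= (e1*n2-e2*n1)*(e1*n2-e2*n1)) by apply Rle_0_sqr. lra. }
  assert (Ht : -σ <= t <= σ) by (split; nra).
  set (w1 := 2/3*n1 + s*r*e1*(1+n3)).
  set (w2 := 2/3*n2 + s*r*e2*(1+n3)).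
  set (w3 := /3*(1-n3) + s*r*t).
  set (W := w1*w1+w2*w2+w3*w3).
  assert (HF : Ff s (r*e1) (r*e2) 1 n1 n2 n3 1 k1 k2 k3 = 1 + n3/3 + s*r*t + (w1*k1+w2*k2+w3*k3)).
  { unfold Ff, w1, w2, w3, t. field. }
  assert (Hwk : w1*k1+w2*k2+w3*k3 <= sqrt W).
  { assert (Hl : (w1*k1+w2*k2+w3*k3)² <= W).
    { unfold Rsqr.
      assert ((w1*k1+w2*k2+w3*k3)*(w1*k1+w2*k2+w3*k3)
        + ((w1*k2-w2*k1)*(w1*k2-w2*k1) + (w1*k3-w3*k1)*(w1*k3-w3*k1) + (w2*k3-w3*k2)*(w2*k3-w3*k2))
        = W * (k1*k1+k2*k2+k3*k3)) by (unfold W; ring).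
      rewrite Hk in H.
      assert (0 <= (w1*k2-w2*k1)*(w1*k2-w2*k1)) by apply Rle_0_sqr.
      assert (0 <= (w1*k3-w3*k1)*(w1*k3-w3*k1)) by apply Rle_0_sqr.
      assert (0 <= (w2*k3-w3*k2)*(w2*k3-w3*k2)) by apply Rle_0_sqr. lra. }
    apply sqrt_le_1_alt in Hl. rewrite sqrt_Rsqr_abs in Hl.
    eapply Rle_trans. apply Rle_abs. exact Hl. }
  assert (HW : W <= Pf s r n3 * Pf s r n3 + Qf s r n3 * Qf s r n3).
  { assert (HW1 : W = 4/9*(n1*n1+n2*n2) + 4/3*s*r*(1+n3)*t + s*s*r*r*(1+n3)*(1+n3)*(e1*e1+e2*e2) + w3*w3)
      by (unfold W, w1, w2, t; field).
    assert (n1*n1+n2*n2 = σ*σ) by lra.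
    rewrite H, He in HW1. rewrite HW1.
    assert (HPQ : Pf s r n3 * Pf s r n3 + Qf s r n3 * Qf s r n3 -
      (4/9*(σ*σ) + 4/3*s*r*(1+n3)*t + s*s*r*r*(1+n3)*(1+n3)*1 + w3*w3)
      = 4/3*s*r*(1+n3)*(σ-t) + (s*r*(σ-t))*(2/3*(1-n3) + s*r*(σ+t)))
      by (unfold Pf, Qf, w3; fold σ; field).
    assert (0 <= 4/3*s*r*(1+n3)*(σ-t)).
    { repeat apply Rmult_le_pos; lra. }
    assert (0 <= (s*r*(σ-t))*(2/3*(1-n3) + s*r*(σ+t))).
    { apply Rmult_le_pos. repeat apply Rmult_le_pos; lra.
      assert (0 <= s*r*(σ+t)) by (repeat apply Rmult_le_pos; lra). lra. }
    lra. }
  apply sqrt_le_1_alt in HW.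
  rewrite HF. unfold hf. fold σ.
  assert (s*r*t <= s*r*σ) by (apply Rmult_le_compat_l; nra).
  lra.
Qed.
Lemma G_attain s r e1 e2 c :
  0 < s -> 0 < r -> e1*e1 + e2*e2 = 1 -> -1 <= c <= 1 ->
  exists n1 n2 n3 k1 k2 k3, n1*n1+n2*n2+n3*n3 = 1 /\ k1*k1+k2*k2+k3*k3 = 1 /\
    n3 = c /\ Ff s (r*e1) (r*e2) 1 n1 n2 n3 1 k1 k2 k3 = hf s r c.
Proof.
  intros Hs Hr He Hc.
  destruct (sg_prop c Hc) as [Hsg0 Hsg].
  assert (HP0 : s*r*(1+c) <= Pf s r c).
  { unfold Pf. assert (0 <= 2/3 * sg c) by lra. lra. }
  assert (HQ0 : /3*(1-c) <= Qf s r c).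
  { unfold Qf. assert (0 <= s*r*sg c) by (repeat apply Rmult_le_pos; lra). lra. }
  set (P := Pf s r c) in *. set (Q := Qf s r c) in *.
  assert (HPQ : 0 < P*P + Q*Q).
  { destruct (Rle_lt_or_eq_dec c 1) as [Hlt|Heq]; [lra| |].
    - assert (0 < Q) by lra. assert (0 < Q*Q) by (apply Rmult_lt_0_compat; lra).
      assert (0 <= P*P) by apply Rle_0_sqr. lra.
    - assert (0 < s*r*(1+c)) by (repeat apply Rmult_lt_0_compat; lra).
      assert (0 < P*P) by (apply Rmult_lt_0_compat; lra).
      assert (0 <= Q*Q) by apply Rle_0_sqr. lra. }
  set (L := sqrt (P*P+Q*Q)).
  assert (HL : L*L = P*P+Q*Q) by (apply sqrt_sqrt; lra).
  assert (HL0 : 0 < L) by (apply sqrt_lt_R0; lra).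
  set (σ := sg c) in *.
  assert (HPd : P = 2/3*σ + s*r*(1+c)) by reflexivity.
  assert (HQd : Q = /3*(1-c) + s*r*σ) by reflexivity.
  assert (Hh : hf s r c = 1 + /3*c + s*r*σ + L) by reflexivity.
  rewrite Hh. clearbody L P Q σ.
  exists (σ*e1), (σ*e2), c, (P*e1/L), (P*e2/L), (Q/L).
  split; [|split; [|split]].
  - replace (σ*e1*(σ*e1)+σ*e2*(σ*e2)+c*c) with (σ*σ*(e1*e1+e2*e2)+c*c) by ring.
    rewrite He, Hsg. ring.
  - replace (P*e1/L*(P*e1/L)+P*e2/L*(P*e2/L)+Q/L*(Q/L)) with ((P*P*(e1*e1+e2*e2)+Q*Q)/(L*L))
      by (field; lra).
    rewrite He, HL. field. lra.
  - reflexivity.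
  - transitivity (1 + /3*c + s*r*σ*(e1*e1+e2*e2) + (P*P*(e1*e1+e2*e2)+(/3*(1-c) + s*r*σ*(e1*e1+e2*e2))*Q)/L).
    + unfold Ff. rewrite HPd, HQd. field. lra.
    + rewrite He. replace (P*P*1+(/3*(1-c) + s*r*σ*1)*Q) with (L*L) by (rewrite HQd in *; lra).
      field. lra.
Qed.

Lemma F0_bound s n1 n2 n3 k1 k2 k3 :
  n1*n1+n2*n2+n3*n3 = 1 -> k1*k1+k2*k2+k3*k3 = 1 ->
  Ff s 0 0 1 n1 n2 n3 1 k1 k2 k3 <= 16/9.
Proof.
  intros Hn Hk. unfold Ff.
  assert (0 <= (n1-k1)*(n1-k1)) by apply Rle_0_sqr.
  assert (0 <= (n2-k2)*(n2-k2)) by apply Rle_0_sqr.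
  assert (0 <= (n3-/3 + (k3-/3)/2)*(n3-/3 + (k3-/3)/2)) by apply Rle_0_sqr.
  assert (0 <= (k3-/3)*(k3-/3)) by apply Rle_0_sqr.
  nra.
Qed.

Definition bl0 (a b : Defs.C) := Cnorm2 a + Cnorm2 b.
Definition bl1 (a b : Defs.C) := 2*(Re a*Re b + Im a*Im b).
Definition bl2 (a b : Defs.C) := 2*(Re a*Im b - Im a*Re b).
Definition bl3 (a b : Defs.C) := Cnorm2 a - Cnorm2 b.

Lemma bloch_unit a b : unit_vec a b ->
  bl0 a b = 1 /\ bl1 a b * bl1 a b + bl2 a b * bl2 a b + bl3 a b * bl3 a b = 1.
Proof.
  unfold unit_vec; intros H. unfold bl0. split. exact H.
  transitivity ((Cnorm2 a + Cnorm2 b)*(Cnorm2 a + Cnorm2 b)).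
  - destruct a, b; unfold bl1, bl2, bl3, Cnorm2; simpl; ring.
  - rewrite H; ring.
Qed.

Lemma amp_exists n1 n2 n3 : n1*n1+n2*n2+n3*n3 = 1 ->
  exists a b, unit_vec a b /\ bl1 a b = n1 /\ bl2 a b = n2 /\ bl3 a b = n3.
Proof.
  intros Hn.
  destruct (Rle_lt_or_eq_dec (-1) n3) as [Hlt|Heq]; [nra| |].
  - set (al := sqrt ((1+n3)/2)).
    assert (Hal : al*al = (1+n3)/2) by (apply sqrt_sqrt; lra).
    assert (Hal0 : 0 < al) by (apply sqrt_lt_R0; lra).
    exists (mkC al 0), (mkC (n1/(2*al)) (n2/(2*al))).
    unfold unit_vec, bl1, bl2, bl3, Cnorm2; simpl.
    split; [|split; [|split]].
    + replace (al*al+0*0+(n1/(2*al)*(n1/(2*al))+n2/(2*al)*(n2/(2*al))))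
        with (al*al + (n1*n1+n2*n2)/(4*(al*al))) by (field; lra).
      rewrite Hal. replace (n1*n1+n2*n2) with ((1-n3)*(1+n3)) by lra. field. lra.
    + field. lra.
    + field. lra.
    + replace (al*al+0*0-(n1/(2*al)*(n1/(2*al))+n2/(2*al)*(n2/(2*al))))
        with (al*al - (n1*n1+n2*n2)/(4*(al*al))) by (field; lra).
      rewrite Hal. replace (n1*n1+n2*n2) with ((1-n3)*(1+n3)) by lra. field. lra.
  - subst n3. assert (n1 = 0) by nra. assert (n2 = 0) by nra. subst.
    exists (mkC 0 0), (mkC 1 0). unfold unit_vec, bl1, bl2, bl3, Cnorm2; simpl.
    repeat split; ring.
Qed.

Lemma overlap_eq x1 x2 a b c d :
  overlap (rhoW x1 x2) a b c d =
  /4 * Ff (1/sqrt 2) x1 x2 (bl0 a b) (bl1 a b) (bl2 a b) (bl3 a b) (bl0 c d) (bl1 c d) (bl2 c d) (bl3 c d).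
Proof.
  destruct a as [ar ai], b as [br bi], c as [cr ci], d as [dr di].
  unfold overlap, rhoW, Sigma0, Sigma1, Sigma2, Sigma3, u, v, z1, z2.
  rewrite sin_PI4, cos_PI4, s2.
  set (s := 1 / sqrt 2).
  unfold trace, mmul, kron2, st, proj2, madd, mscale, Ff, bl0, bl1, bl2, bl3, Cnorm2.
  simpl. clearbody s. field.
Qed.


Theorem mainTheorem6 :
  (forall i j : nat, (i < 4)%nat -> (j < 4)%nat -> rhoW 0 0 i j = Wred i j) /\
  (forall x1 x2 : R,
     x1 ^ 2 + x2 ^ 2 + 1 / 9 <= 1 ->
     x1 ^ 2 + x2 ^ 2 > 0 ->
     exists m m0 : R,
       is_g (rhoW x1 x2) m /\ is_g (rhoW 0 0) m0 /\ m0 = 4 / 9 /\ m > m0).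
Proof.
  split. { intros; apply part1; auto. }
  intros x1 x2 H1 H2.
  assert (Hs : 0 < 1 / sqrt 2) by (apply Rdiv_lt_0_compat; [lra| apply sqrt_lt_R0; lra]).
  assert (Hov : forall y1 y2 a b c d, unit_vec a b -> unit_vec c d ->
    overlap (rhoW y1 y2) a b c d = /4 * Ff (1/sqrt 2) y1 y2 1 (bl1 a b) (bl2 a b) (bl3 a b) 1 (bl1 c d) (bl2 c d) (bl3 c d)).
  { intros y1 y2 a b c d Hab Hcd. rewrite overlap_eq.
    destruct (bloch_unit a b Hab) as [-> _]. destruct (bloch_unit c d Hcd) as [-> _]. reflexivity. }
  generalize dependent (1 / sqrt 2). intros s Hs Hov.
  assert (Hrx : exists r e1 e2, 0 < r /\ e1*e1+e2*e2 = 1 /\ x1 = r*e1 /\ x2 = r*e2).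
  { set (r := sqrt (x1^2+x2^2)).
    assert (Hr : r*r = x1^2+x2^2) by (apply sqrt_sqrt; lra).
    assert (Hr0 : 0 < r) by (apply sqrt_lt_R0; lra).
    exists r, (x1/r), (x2/r). split; [lra|split;[|split]].
    - replace (x1/r*(x1/r)+x2/r*(x2/r)) with ((x1^2+x2^2)/(r*r)) by (field; lra).
      rewrite Hr. field. lra.
    - field. lra.
    - field. lra. }
  destruct Hrx as (r & e1 & e2 & Hr & He & -> & ->).
  assert (Hhc : forall c, -1 <= c <= 1 -> continuity_pt (hf s r) c) by (intros; apply hf_cont; auto).
  destruct (continuity_ab_maj (hf s r) (-1) 1 ltac:(lra) Hhc) as [cm [Hmax Hcm]].
  set (σ0 := sqrt (8/9)).
  assert (Hσ : σ0*σ0 = 8/9) by (apply sqrt_sqrt; lra).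
  assert (Hσ0 : 0 < σ0) by (apply sqrt_lt_R0; lra).
  exists (hf s r cm / 4), (4/9).
  split; [|split;[|split]].
  - split.
    + destruct (G_attain s r e1 e2 cm Hs Hr He Hcm) as (n1&n2&n3&k1&k2&k3&Hn&Hk&Hn3&HF).
      destruct (amp_exists _ _ _ Hn) as (a&b&Hab&E1&E2&E3).
      destruct (amp_exists _ _ _ Hk) as (c&d&Hcd&F1&F2&F3).
      exists a,b,c,d. split; [auto|split;[auto|]]. rewrite Hov by auto.
      rewrite E1,E2,E3,F1,F2,F3, HF. field.
    + intros a b c d Hab Hcd. rewrite Hov by auto.
      destruct (bloch_unit a b Hab) as [_ Hn]. destruct (bloch_unit c d Hcd) as [_ Hk].
      assert (Hb := G_bound s r e1 e2 _ _ _ _ _ _ Hs Hr He Hn Hk).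
      assert (Hc : -1 <= bl3 a b <= 1) by nra.
      assert (Hm := Hmax _ Hc). lra.
  - split.
    + assert (Hu : σ0*σ0+0*0+/3*/3 = 1) by (rewrite <- (Rplus_0_r (σ0*σ0)) at 1; rewrite Hσ; field).
      destruct (amp_exists σ0 0 (/3) ltac:(replace (σ0*σ0+0*0+/3*/3) with (σ0*σ0+/9) by field; rewrite Hσ; field))
        as (a&b&Hab&E1&E2&E3).
      exists a,b,a,b. split;[auto|split;[auto|]]. rewrite Hov by auto. rewrite E1,E2,E3.
      unfold Ff. replace (σ0*σ0+0*0) with (8/9) by (rewrite Hσ; ring). field.
    + intros a b c d Hab Hcd. rewrite Hov by auto.
      destruct (bloch_unit a b Hab) as [_ Hn]. destruct (bloch_unit c d Hcd) as [_ Hk].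
      assert (Hb := F0_bound s _ _ _ _ _ _ Hn Hk). lra.
  - reflexivity.
  - assert (Hn : σ0*e1*(σ0*e1)+σ0*e2*(σ0*e2)+/3*/3 = 1).
    { replace (σ0*e1*(σ0*e1)+σ0*e2*(σ0*e2)+/3*/3) with (σ0*σ0*(e1*e1+e2*e2)+/9) by field.
      rewrite He, Hσ. field. }
    assert (Hb := G_bound s r e1 e2 _ _ _ _ _ _ Hs Hr He Hn Hn).
    assert (Hm := Hmax (/3) ltac:(lra)).
    assert (Fval : Ff s (r*e1) (r*e2) 1 (σ0*e1) (σ0*e2) (/3) 1 (σ0*e1) (σ0*e2) (/3)
       = 1 + 2/9 + 2/3*(σ0*σ0)*(e1*e1+e2*e2) - /27 + 8/3*s*r*σ0*(e1*e1+e2*e2))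
      by (unfold Ff; field).
    rewrite He, Hσ in Fval.
    assert (0 < s*r*σ0) by (repeat apply Rmult_lt_0_compat; lra).
    lra.
Qed.
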